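(* Let $\alpha:X\to P(A\times X+1)$ be a discrete probabilistic transition system, $\langle\!\langle-\rangle\!\rangle:X\to\mathcal M(A^\infty)$ its trace semantics, and $\beta$ and $\varphi_\beta$ as in the context. Then for all $x,y\in X$: $\langle\!\langle x\rangle\!\rangle=\langle\!\langle y\rangle\!\rangle$ if and only if $\varphi_\beta(\delta_x)=\varphi_\beta(\delta_y)$.
   Context: $X$ a set, $A$ a finite alphabet, $1=\{*\}$, $\mathbb I=[0,1]$; $P(Y)$ is the set of finitely supported probability distributions on $Y$; $\delta_x$ the point mass at $x$. $A^\infty=A^*\cup A^\omega$ with $\sigma$-algebra generated by $\{\emptyset\}\cup\{\{w\}\mid w\in A^*\}\cup\{wA^\infty\mid w\in A^*\}$, and $\mathcal M(A^\infty)$ is the set of sub-probability measures on it. The trace semantics $\langle\!\langle x\rangle\!\rangle\in\mathcal M(A^\infty)$ is the unique family of measures with $\langle\!\langle x\rangle\!\rangle(A^\infty)=1$, $\langle\!\langle x\rangle\!\rangle(\{\varepsilon\})=\alpha(x)( * )$, $\langle\!\langle x\rangle\!\rangle(awA^\infty)=\sum_y\alpha(x)(a,y)\langle\!\langle y\rangle\!\rangle(wA^\infty)$, $\langle\!\langle x\rangle\!\rangle(\{aw\})=\sum_y\alpha(x)(a,y)\langle\!\langle y\rangle\!\rangle(\{w\})$. Let $\mathbb R^X_\omega$ be the real vector space of finitely supported functions $X\to\mathbb R$, and $\beta=\langle\beta_1,\beta_*,a\mapsto\tau_a\rangle:\mathbb R^X_\omega\to\mathbb R\times\mathbb R\times(\mathbb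 R^X_\omega)^A$ the linear maps $\beta_1(u)=\sum_{x}u(x)\sum_{z\in A\times X+1}\alpha(x)(z)=\sum_x u(x)$, $\beta_*(u)=\sum_x u(x)\alpha(x)( * )$, $\tau_a(u)(y)=\sum_x u(x)\alpha(x)(a,y)$. $\varphi_\beta:\mathbb R^X_\omega\to(\mathbb R\times\mathbb R)^{A^*}$ is the map $\varphi_\beta(u)(\varepsilon)=(\beta_1(u),\beta_*(u))$, $\varphi_\beta(u)(aw)=\varphi_\beta(\tau_a(u))(w)$ (the final-coalgebra morphism for the functor $Y\mapsto\mathbb R\times\mathbb R\times Y^A$). *)

(* Defs.v *)
From Stdlib Require Import Reals Lra List ClassicalEpsilon.
Import ListNotations.
Open Scope R_scope.
Set Implicit Arguments.

Definition eqb_cl {T : Type} (a b : T) : bool :=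
  if excluded_middle_informative (a = b) then true else false.

Record pdist (Y : Type) := {
  dsupp : list Y;
  dval  : Y -> R;
  dsupp_nodup : NoDup dsupp;
  dsupp_spec  : forall z, dval z <> 0 -> In z dsupp;
  dval_nonneg : forall z, 0 <= dval z;
  dval_sum1   : fold_right Rplus 0 (map dval dsupp) = 1
}.

Section PTS.
Variables (A X : Type).
(* alpha : X -> P(A x X + 1); None plays the role of the point of 1. *)
Variable alpha : X -> pdist (option (A * X)).

Definition sum_succ (x : X) (a : A) (g : X -> R) : R :=
  fold_right Rplus 0
    (map (fun z => match z with
                   | Some (b, y) => if eqb_cl a b then dval (alpha x) z * g y else 0
                   | None => 0 end)
         (dsupp (alpha x))).

(* Finitely supported functions X -> R represented as formal finite sums
   sum_i c_i * delta_{x_i}, i.e. lists of pairs (x_i, c_i). *)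
Definition fsfun := list (X * R).

Definition delta (x : X) : fsfun := [(x, 1)].

Definition beta1 (u : fsfun) : R :=
  fold_right Rplus 0
    (map (fun p => snd p * fold_right Rplus 0 (map (dval (alpha (fst p))) (dsupp (alpha (fst p))))) u).

Definition betastar (u : fsfun) : R :=
  fold_right Rplus 0 (map (fun p => snd p * dval (alpha (fst p)) None) u).

Definition tau (a : A) (u : fsfun) : fsfun :=
  flat_map (fun p =>
     flat_map (fun z => match z with
                        | Some (b, y) => if eqb_cl a b
                                         then [(y, snd p * dval (alpha (fst p)) z)] else []
                        | None => [] end)
              (dsupp (alpha (fst p)))) u.

Fixpoint phi_beta (u : fsfun) (w : list A) {struct w} : R * R :=
  match w with
  | [] => (beta1 u, betastar u)
  | a :: w' => phi_beta (tau a u) w'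
  end.

End PTS.

(* A word is a sequence nat -> option A that, once undefined, stays undefined. *)
Record Ainf (A : Type) := {
  letter : nat -> option A;
  letter_wf : forall n, letter n = None -> letter (S n) = None
}.

Definition set_ (A : Type) := Ainf A -> Prop.

Definition sing {A : Type} (w : list A) : set_ A :=
  fun s => forall n, letter s n = nth_error w n.

Definition cyl {A : Type} (w : list A) : set_ A :=
  fun s => forall n, (n < length w)%nat -> letter s n = nth_error w n.

Definition fullset {A : Type} : set_ A := fun _ => True.
Definition emptyset {A : Type} : set_ A := fun _ => False.

Inductive measurable {A : Type} : set_ A -> Prop :=
  | meas_empty : measurable emptyset
  | meas_sing  : forall w, measurable (sing w)
  | meas_cyl   : forall w, measurable (cyl w)
  | meas_compl : forall S, measurable S -> measurable (fun s => ~ S s)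
  | meas_union : forall F : nat -> set_ A, (forall n, measurable (F n)) ->
                   measurable (fun s => exists n, F n s)
  | meas_ext   : forall S T, measurable S -> (forall s, S s <-> T s) -> measurable T.

Record measure (A : Type) := {
  mu : set_ A -> R;
  mu_ext : forall S T, measurable S -> (forall s, S s <-> T s) -> mu S = mu T;
  mu_nonneg : forall S, measurable S -> 0 <= mu S;
  mu_empty : mu emptyset = 0;
  mu_sigma_add : forall F : nat -> set_ A,
      (forall n, measurable (F n)) ->
      (forall n m s, n <> m -> F n s -> F m s -> False) ->
      infinite_sum (fun n => mu (F n)) (mu (fun s => exists n, F n s));
  mu_sub : mu fullset <= 1
}.

Definition measure_eq {A : Type} (m1 m2 : measure A) : Prop :=
  forall S, measurable S -> mu m1 S = mu m2 S.

Definition is_trace_semantics {A X : Type} (alpha : X -> pdist (option (A * X)))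
    (tr : X -> measure A) : Prop :=
  forall x,
    mu (tr x) fullset = 1 /\
    mu (tr x) (sing []) = dval (alpha x) None /\
    (forall a w, mu (tr x) (cyl (a :: w)) = sum_succ alpha x a (fun y => mu (tr y) (cyl w))) /\
    (forall a w, mu (tr x) (sing (a :: w)) = sum_succ alpha x a (fun y => mu (tr y) (sing w))).

(* Main.v *)
Require Import Defs.
From Stdlib Require Import Reals List.
From Stdlib Require Import Lra Lia Classical FunctionalExtensionality.
Import ListNotations.
Open Scope R_scope.

Inductive dyn {T : Type} (G : (T -> Prop) -> Prop) : (T -> Prop) -> Prop :=
| d_gen S : G S -> dyn G S
| d_compl S : dyn G S -> dyn G (fun s => ~ S s)
| d_dunion (F : nat -> T -> Prop) : (forall n, dyn G (F n)) ->
    (forall n m s, n <> m -> F n s -> F m s -> False) ->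
    dyn G (fun s => exists n, F n s)
| d_ext S S' : dyn G S -> (forall s, S s <-> S' s) -> dyn G S'.

Definition bin {T : Type} (P Q : T -> Prop) (n : nat) : T -> Prop :=
  match n with 0 => P | 1 => Q | _ => fun _ => False end.

Lemma dyn_bin {T : Type} (G : (T -> Prop) -> Prop) (P Q : T -> Prop) :
  dyn G (fun _ => False) -> dyn G P -> dyn G Q -> (forall s, P s -> Q s -> False) ->
  dyn G (fun s => P s \/ Q s).
Proof.
  intros He HP HQ Hd.
  apply d_ext with (S := fun s => exists n, bin P Q n s).
  - apply d_dunion.
    + intros [|[|n]]; simpl; auto.
    + intros [|[|n]] [|[|m]] s Hnm; simpl; try tauto; try congruence; eauto.
  - intros s; split.
    + intros [[|[|n]] H]; simpl in H; tauto.
    + intros [H|H]; [exists 0%nat | exists 1%nat]; exact H.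
Qed.

Lemma dyn_inter_step {T : Type} (G : (T -> Prop) -> Prop) (E : T -> Prop) :
  dyn G (fun _ => False) -> dyn G E ->
  (forall S, G S -> dyn G (fun s => S s /\ E s)) ->
  forall S, dyn G S -> dyn G (fun s => S s /\ E s).
Proof.
  intros He HE HG S HS; induction HS.
  - auto.
  - apply d_ext with (S := fun s => ~ ((S s /\ E s) \/ ~ E s)).
    + apply d_compl. apply dyn_bin; auto using d_compl; tauto.
    + intros s; tauto.
  - apply d_ext with (S := fun s => exists n, F n s /\ E s).
    + apply d_dunion; auto. intros n m s Hnm [Ha _] [Hb _]; eauto.
    + intros s; split. intros [n [Ha Hb]]; split; eauto.
      intros [[n Ha] Hb]; eauto.
  - eapply d_ext; [exact IHHS|]. intros s; specialize (H s); tauto.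
Qed.

Lemma dyn_inter {T : Type} (G : (T -> Prop) -> Prop) :
  dyn G (fun _ => False) ->
  (forall S S', G S -> G S' -> dyn G (fun s => S s /\ S' s)) ->
  forall S D, dyn G S -> dyn G D -> dyn G (fun s => S s /\ D s).
Proof.
  intros He Hpi.
  assert (H1 : forall E S, G E -> dyn G S -> dyn G (fun s => S s /\ E s)).
  { intros E S HE HS. apply dyn_inter_step; auto using d_gen. }
  intros S D HS HD. apply dyn_inter_step; auto.
  intros S' HS'. eapply d_ext; [apply (H1 S' D HS' HD)|]. intros s; tauto.
Qed.

Lemma dyn_union {T : Type} (G : (T -> Prop) -> Prop) :
  dyn G (fun _ => False) ->
  (forall S S', G S -> G S' -> dyn G (fun s => S s /\ S' s)) ->
  forall F : nat -> T -> Prop, (forall n, dyn G (F n)) ->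
  dyn G (fun s => exists n, F n s).
Proof.
  intros He Hpi F HF.
  assert (HC : forall n, dyn G (fun s => forall k, (k < n)%nat -> ~ F k s)).
  { induction n.
    - eapply d_ext; [apply d_compl; exact He|]. intros s; split; intros; [lia|tauto].
    - eapply d_ext; [apply (dyn_inter _ He Hpi _ _ IHn (d_compl _ _ (HF n)))|].
      intros s; split.
      + intros [H1 H2] k Hk. destruct (Nat.eq_dec k n); subst; auto. apply H1; lia.
      + intros H; split; [intros k Hk; apply H; lia| apply H; lia]. }
  apply d_ext with (S := fun s => exists n, F n s /\ forall k, (k < n)%nat -> ~ F k s).
  - apply d_dunion.
    + intros n. apply dyn_inter; auto.
    + intros n m s Hnm [H1 H2] [H3 H4].
      destruct (Nat.lt_total n m) as [Hl|[Hl|Hl]]; [eapply H4; eauto|lia|eapply H2; eauto].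
  - intros s; split.
    + intros [n [H _]]; eauto.
    + intros [n Hn].
      induction n as [n IH] using (well_founded_induction Wf_nat.lt_wf).
      destruct (classic (exists k, (k < n)%nat /\ F k s)) as [[k [Hk1 Hk2]]|Hno].
      * exact (IH k Hk1 Hk2).
      * exists n; split; auto. intros k Hk Hf; apply Hno; eauto.
Qed.

Lemma sum_two (u : nat -> R) (L : R) :
  (forall n, (n >= 2)%nat -> u n = 0) -> infinite_sum u L -> L = u 0%nat + u 1%nat.
Proof.
  intros H0 HL. apply (uniqueness_sum u); auto.
  assert (Hs : forall n, (n >= 1)%nat -> sum_f_R0 u n = u 0%nat + u 1%nat).
  { induction n; intros Hn; [lia|]. destruct n; [simpl; ring|].
    change (sum_f_R0 u (S (S n))) with (sum_f_R0 u (S n) + u (S (S n))).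
    rewrite IHn by lia. rewrite (H0 (S (S n))) by lia. ring. }
  intros eps Heps. exists 1%nat. intros n Hn. rewrite Hs by lia.
  unfold R_dist. rewrite Rminus_diag, Rabs_R0; lra.
Qed.

Lemma mu_full_compl {A : Type} (m : measure A) (S : set_ A) :
  measurable S -> mu m fullset = mu m S + mu m (fun s => ~ S s).
Proof.
  intros HS.
  assert (Hm : forall n, measurable (bin S (fun s => ~ S s) n)).
  { intros [|[|n]]; simpl; auto using meas_compl.
    eapply meas_ext; [apply meas_empty|]. unfold emptyset; tauto. }
  pose proof (mu_sigma_add m _ Hm) as H.
  assert (Hd : forall n k s, n <> k -> bin S (fun s => ~ S s) n s ->
                bin S (fun s => ~ S s) k s -> False).
  { intros [|[|n]] [|[|k]] s Hnk; simpl; try tauto; congruence. }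
  specialize (H Hd).
  apply sum_two in H.
  - simpl in H. rewrite <- H. symmetry. apply mu_ext.
    + apply meas_union; auto.
    + intros s; split; [unfold fullset; auto|].
      intros _. destruct (classic (S s)); [exists 0%nat|exists 1%nat]; simpl; auto.
  - intros [|[|n]] Hn; try lia. simpl.
    rewrite <- (mu_empty m). apply mu_ext; [|unfold emptyset; tauto].
    eapply meas_ext; [apply meas_empty|]. unfold emptyset; tauto.
Qed.

Lemma dyn_agree {A : Type} (m1 m2 : measure A) (G : set_ A -> Prop) :
  (forall S, G S -> measurable S /\ mu m1 S = mu m2 S) ->
  mu m1 fullset = mu m2 fullset ->
  forall S, dyn G S -> measurable S /\ mu m1 S = mu m2 S.
Proof.
  intros HG Hf S HS; induction HS.
  - auto.
  - destruct IHHS as [Hm He]. split; [apply meas_compl; auto|].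
    pose proof (mu_full_compl m1 _ Hm). pose proof (mu_full_compl m2 _ Hm). lra.
  - assert (Hm : forall n, measurable (F n)) by (intros n; apply H0).
    split; [apply meas_union; auto|].
    pose proof (mu_sigma_add m1 F Hm H1) as Ha.
    pose proof (mu_sigma_add m2 F Hm H1) as Hb.
    replace (fun n => mu m1 (F n)) with (fun n => mu m2 (F n)) in Ha
      by (apply functional_extensionality; intros n; symmetry; apply H0).
    eapply uniqueness_sum; eauto.
  - destruct IHHS as [Hm He]. split; [eapply meas_ext; eauto|].
    rewrite <- (@mu_ext _ m1 S S' Hm H), <- (@mu_ext _ m2 S S' Hm H); auto.
Qed.

Definition gen {A : Type} (S : set_ A) : Prop :=
  S = emptyset \/ S = fullset \/ (exists w, S = sing w) \/ (exists w, S = cyl w).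

Lemma gen_pi {A : Type} (S S' : set_ A) :
  gen S -> gen S' -> dyn gen (fun s => S s /\ S' s).
Proof.
  intros HS HS'.
  destruct (classic (exists s0, S s0 /\ S' s0)) as [[s0 [H0 H0']]|Hno].
  2:{ apply d_ext with (S := emptyset). apply d_gen; left; auto.
      intros s; unfold emptyset; split; [tauto|]. intros H; apply Hno; eauto. }
  assert (Hsub : (forall s, S s -> S' s) \/ (forall s, S' s -> S s)).
  { destruct HS as [->|[->|[[w ->]|[w ->]]]];
    destruct HS' as [->|[->|[[v ->]|[v ->]]]];
    unfold emptyset, fullset in *; try tauto.
    - left; intros s Hs n. rewrite Hs, <- H0, H0'; auto.
    - left; intros s Hs n Hn. rewrite Hs, <- H0, H0'; auto.
    - right; intros s Hs n Hn. rewrite Hs, <- H0', H0; auto.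
    - destruct (Nat.le_ge_cases (length w) (length v)).
      + right; intros s Hs n Hn. rewrite Hs, <- H0', H0; auto; lia.
      + left; intros s Hs n Hn. rewrite Hs, <- H0, H0'; auto; lia. }
  destruct Hsub as [Hs|Hs].
  - apply d_ext with (S := S); [apply d_gen; auto|]. intros s; split; auto; tauto.
  - apply d_ext with (S := S'); [apply d_gen; auto|]. intros s; split; auto; tauto.
Qed.

Definition Mf {X : Type} (u : list (X * R)) (f : X -> R) : R :=
  fold_right Rplus 0 (map (fun p => snd p * f (fst p)) u).

Lemma Mf_app {X : Type} (u v : list (X * R)) f : Mf (u ++ v) f = Mf u f + Mf v f.
Proof. unfold Mf; induction u; simpl; [ring|]. rewrite IHu; ring. Qed.

Lemma Mf_tau {A X : Type} (alpha : X -> pdist (option (A * X))) a u f :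
  Mf (tau alpha a u) f = Mf u (fun x => sum_succ alpha x a f).
Proof.
  induction u as [|p u IH]; [reflexivity|].
  unfold tau in *; simpl flat_map. rewrite Mf_app, IH.
  unfold Mf at 3; simpl. f_equal.
  unfold sum_succ. destruct p as [x c]; simpl.
  induction (dsupp (alpha x)) as [|z l IHl]; simpl; [unfold Mf; simpl; ring|].
  rewrite Mf_app, IHl. destruct z as [[b y]|].
  - destruct (eqb_cl a b); unfold Mf; simpl; ring.
  - unfold Mf; simpl; ring.
Qed.

Lemma key {A X : Type} (alpha : X -> pdist (option (A * X))) (tr : X -> measure A)
  (Htr : is_trace_semantics alpha tr) :
  forall w u, phi_beta alpha u w =
    (Mf u (fun x => mu (tr x) (cyl w)), Mf u (fun x => mu (tr x) (sing w))).
Proof.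
  induction w as [|a w IH]; intros u.
  - simpl. f_equal.
    + unfold beta1, Mf. f_equal. apply map_ext. intros [x c]; simpl.
      rewrite dval_sum1. f_equal. destruct (Htr x) as [H1 _].
      rewrite <- H1. symmetry. apply mu_ext. apply meas_cyl.
      intros s; unfold cyl, fullset; split; auto. intros _ n Hn; simpl in Hn; lia.
    + unfold betastar, Mf. f_equal. apply map_ext. intros [x c]; simpl.
      destruct (Htr x) as [_ [H2 _]]. rewrite H2; auto.
  - simpl. rewrite IH, !Mf_tau. f_equal; unfold Mf; f_equal; apply map_ext;
      intros [x c]; simpl; destruct (Htr x) as [_ [_ [H3 H4]]];
      [rewrite H3|rewrite H4]; auto.
Qed.

Lemma key_delta {A X : Type} (alpha : X -> pdist (option (A * X))) (tr : X -> measure A)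
  (Htr : is_trace_semantics alpha tr) x w :
  phi_beta alpha (delta x) w = (mu (tr x) (cyl w), mu (tr x) (sing w)).
Proof. rewrite (key alpha tr Htr). unfold Mf, delta; simpl. f_equal; ring. Qed.

Theorem mainTheorem16 (A : Type) (A_finite : exists l : list A, forall a, In a l)
  (X : Type) (alpha : X -> pdist (option (A * X))) (tr : X -> measure A)
  (Htr : is_trace_semantics alpha tr) (x y : X) :
  measure_eq (tr x) (tr y) <-> phi_beta alpha (delta x) = phi_beta alpha (delta y).
Proof.
  split.
  - intros H. apply functional_extensionality; intros w.
    rewrite !(key_delta alpha tr Htr).
    rewrite (H _ (meas_cyl w)), (H _ (meas_sing w)); auto.
  - intros H.
    assert (Hw : forall w, mu (tr x) (cyl w) = mu (tr y) (cyl w) /\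
                           mu (tr x) (sing w) = mu (tr y) (sing w)).
    { intros w. pose proof (f_equal (fun f => f w) H) as Hw. simpl in Hw.
      rewrite !(key_delta alpha tr Htr) in Hw. inversion Hw; auto. }
    assert (Hf : mu (tr x) fullset = mu (tr y) fullset).
    { destruct (Htr x) as [-> _]; destruct (Htr y) as [-> _]; auto. }
    assert (HG : forall S, gen S -> measurable S /\ mu (tr x) S = mu (tr y) S).
    { intros S [->|[->|[[w ->]|[w ->]]]].
      - split; [apply meas_empty|]. rewrite !mu_empty; auto.
      - split; auto. eapply meas_ext; [apply meas_compl, meas_empty|].
        unfold emptyset, fullset; tauto.
      - split; [apply meas_sing| apply Hw].
      - split; [apply meas_cyl| apply Hw]. }
    assert (He : dyn (@gen A) (fun _ => False)).
    { apply d_gen; left; reflexivity. }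
    intros S HS. apply (dyn_agree (tr x) (tr y) (@gen A) HG Hf).
    induction HS.
    + exact He.
    + apply d_gen; right; right; left; eauto.
    + apply d_gen; right; right; right; eauto.
    + apply d_compl; auto.
    + apply dyn_union; auto. intros; apply gen_pi; auto.
    + eapply d_ext; eauto.
Qed.
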